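(* Let $\mathbf{x}$ be a feasible solution of $\textsc{Node-MC-Rel}$, let $\ell$ be uniform on $\{1,\dots,k\}$ and, independently, $\theta$ uniform on $(0,1/2)$, and $C=\bigcup_{i\neq\ell}B^+(s_i,\theta)$. Then $\mathbb{E}\big[\sum_{v\in C}w_v\big]\le 2(1-1/k)\sum_{v\in V}w_vx_v$.
   Context: $G=(V,E)$ is an undirected graph with non-negative node weights $w_v$ and terminal set $S=\{s_1,\dots,s_k\}$, $k\ge2$, forming an independent set. For $i<j$, $\mathcal{P}_{ij}$ is the set of paths between $s_i$ and $s_j$. $\textsc{Node-MC-Rel}$: minimize $\sum_{v\in V\setminus S}w_vx_v$ s.t. $\sum_{v\in p}x_v\ge1$ for all $p\in\mathcal{P}_{ij}$, $i<j$ (sum over all vertices of $p$ including endpoints), $x_v=0$ for $v\in S$, $x\ge0$. $d(a,b)$ is the minimum over paths from $a$ to $b$ of the sum of $x$ over all vertices of the path including both endpoints. $B(u,r)=\{v:d(u,v)\le r\}$; $B^+(u,r)$ is the set of nodes not in $B(u,r)$ adjacent to some node of $B(u,r)$. *)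

(* Defs.v *)
From Stdlib Require Import Reals ClassicalEpsilon.
From mathcomp Require Import all_boot.
Set Implicit Arguments. Unset Strict Implicit. Unset Printing Implicit Defensive.

Local Open Scope R_scope.

Section Graph.
Variables (V : finType) (adj : rel V).

Definition rsum_seq (s : seq V) (f : V -> R) : R := \big[Rplus/0]_(v <- s) f v.

Definition is_path (a b : V) (q : seq V) : Prop :=
  path adj a q /\ last a q = b /\ uniq (a :: q).

(* x-length of a path: sum of x over ALL its vertices, endpoints included *)
Definition path_len (x : V -> R) (a : V) (q : seq V) : R := rsum_seq (a :: q) x.

Definition is_dist (x : V -> R) (a b : V) (delta : R) : Prop :=
  (exists q, is_path a b q /\ path_len x a q = delta) /\
  (forall q, is_path a b q -> delta <= path_len x a q).

Definition ball (x : V -> R) (u : V) (r : R) (v : V) : Prop :=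
  exists delta, is_dist x u v delta /\ delta <= r.

Definition ball_plus (x : V -> R) (u : V) (r : R) (v : V) : Prop :=
  ~ ball x u r v /\ exists b, ball x u r b /\ adj b v.

Definition wset (w : V -> R) (P : V -> Prop) : R :=
  \big[Rplus/0]_(v : V) (if excluded_middle_informative (P v) then w v else 0).

Definition node_mc_feasible (k : nat) (s : 'I_k -> V) (x : V -> R) : Prop :=
  (forall v, 0 <= x v) /\
  (forall i, x (s i) = 0) /\
  (forall i j : 'I_k, (i < j)%N ->
     forall q, is_path (s i) (s j) q -> 1 <= path_len x (s i) q).

Definition cut_set (k : nat) (s : 'I_k -> V) (x : V -> R) (l : 'I_k) (theta : R)
  (v : V) : Prop :=
  exists i : 'I_k, i <> l /\ ball_plus x (s i) theta v.

Definition avg_cut_weight (k : nat) (s : 'I_k -> V) (w x : V -> R) (theta : R) : R :=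
  / INR k * \big[Rplus/0]_(l < k) wset w (cut_set s x l theta).

End Graph.

(* Main.v *)
From Stdlib Require Import Reals Lra ClassicalEpsilon.
From Coquelicot Require Import Coquelicot.
From mathcomp Require Import all_boot.
From mathcomp Require Import ssralg ssrnum Rstruct.
Require Import Defs.
Set Implicit Arguments. Unset Strict Implicit. Unset Printing Implicit Defensive.
Local Open Scope R_scope.

Section SeqSums.
Variable T : finType.

Lemma rs_cons (a : T) s f : rsum_seq (a :: s) f = f a + rsum_seq s f.
Proof. by rewrite /rsum_seq big_cons. Qed.

Lemma rs_nil f : rsum_seq ([::] : seq T) f = 0.
Proof. by rewrite /rsum_seq big_nil. Qed.

Lemma rs_cat (s1 s2 : seq T) f : rsum_seq (s1 ++ s2) f = rsum_seq s1 f + rsum_seq s2 f.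
Proof. rewrite /rsum_seq. change ((\sum_(v <- s1 ++ s2) f v) = \sum_(v <- s1) f v + \sum_(v <- s2) f v)%R. exact: big_cat. Qed.

Lemma rs_rcons (s : seq T) a f : rsum_seq (rcons s a) f = rsum_seq s f + f a.
Proof. by rewrite -cats1 rs_cat rs_cons rs_nil Rplus_0_r. Qed.

Lemma rs_rev (s : seq T) f : rsum_seq (rev s) f = rsum_seq s f.
Proof. rewrite /rsum_seq. change ((\sum_(v <- rev s) f v) = \sum_(v <- s) f v)%R. exact: big_rev. Qed.

Lemma rs_ge0 (s : seq T) f : (forall v, 0 <= f v) -> 0 <= rsum_seq s f.
Proof. move=> H; elim: s => [|a s IH]; rewrite ?rs_nil ?rs_cons; [lra| have := H a; lra]. Qed.

Lemma rs_undup (s : seq T) f : (forall v, 0 <= f v) -> rsum_seq (undup s) f <= rsum_seq s f.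
Proof.
move=> H; elim: s => [|a s IH] /=; first by lra.
case: ifP => _; rewrite !rs_cons; have := H a; lra.
Qed.

Lemma rs_sub (s t : seq T) f : (forall v, 0 <= f v) -> uniq s -> {subset s <= t} ->
  rsum_seq s f <= rsum_seq t f.
Proof.
move=> H us st; apply: Rle_trans (rs_undup t H).
rewrite /rsum_seq; apply/RleP.
change ((\sum_(v <- s) f v) <= \sum_(v <- undup t) f v)%R.
have e1 : (\sum_(v <- s) f v = \sum_(v in s) f v)%R := big_uniq _ us.
have e2 : (\sum_(v <- undup t) f v = \sum_(v in undup t) f v)%R := big_uniq _ (undup_uniq t).
rewrite e1 e2 (big_mkcond (fun i => i \in s)) (big_mkcond (fun i => i \in undup t)).
apply: Num.Theory.ler_sum => i _.
case: ifP => his; first by rewrite mem_undup (st _ his); by apply/RleP; apply: Rle_refl.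
case: ifP => _; last by apply/RleP; apply: Rle_refl.
by apply/RleP; apply: H.
Qed.

Lemma sum_ones k : \big[Rplus/0]_(l < k) (1:R) = INR k.
Proof.
elim: k => [|k IH]; first by rewrite big_ord0.
rewrite big_ord_recr /= IH; destruct k; simpl; lra.
Qed.

End SeqSums.

Lemma list_min (T : eqType) (L : seq T) (P : T -> Prop) (f : T -> R) :
  (exists a, a \in L /\ P a) ->
  exists a, a \in L /\ P a /\ forall b, b \in L -> P b -> f a <= f b.
Proof.
elim: L => [|c L IH] [a [aL Pa]]; first by rewrite in_nil in aL.
have [Hex|nex] := classic (exists a, a \in L /\ P a) .
  - have [d [dL [Pd Hd]]] := IH Hex.
    have [Pc|nPc] := classic (P c).
    + have [le|lt] := Rle_dec (f c) (f d).
      * exists c; split; first exact: mem_head.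
        split=> // b; rewrite inE => /orP[/eqP->|bL] Pb; first lra.
        by apply: Rle_trans le (Hd b bL Pb).
      * exists d; split; first by rewrite inE dL orbT.
        split=> // b; rewrite inE => /orP[/eqP->|bL] Pb; first lra.
        exact: Hd.
    + exists d; split; first by rewrite inE dL orbT.
      split=> // b; rewrite inE => /orP[/eqP->|bL] Pb; first by [].
      exact: Hd.
  - exists c; rewrite mem_head; split=> //.
    have Pc : P c.
      move: aL; rewrite inE => /orP[/eqP<-//|aL]; exfalso; apply: nex; by exists a.
    split=> // b; rewrite inE => /orP[/eqP->|bL] Pb; first lra.
    exfalso; apply: nex; by exists b.
Qed.


Section Paths.
Variables (V : finType) (adj : rel V) (x : V -> R).
Hypothesis xpos : forall v, 0 <= x v.

Lemma plen_ge0 a q : 0 <= path_len x a q.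
Proof. exact: rs_ge0. Qed.

Lemma prefix_path a b q v : is_path adj a b q -> v \in a :: q ->
  exists q', is_path adj a v q' /\ path_len x a q' <= path_len x a q.
Proof.
move=> [pq [lq uq]]; rewrite inE => /orP[/eqP->|vq].
  exists [::]; split; first by split.
  rewrite /path_len !rs_cons rs_nil; have := rs_ge0 q xpos; lra.
case/splitPr: vq pq lq uq => q1 q2 pq lq uq.
exists (rcons q1 v); split.
  split; last split.
  - by move: pq; rewrite cat_path rcons_path /= => /and3P[-> ->].
  - by rewrite last_rcons.
  - have E : a :: q1 ++ v :: q2 = (a :: rcons q1 v) ++ q2 by rewrite -cats1 /= -catA.
    by move: uq; rewrite E cat_uniq => /andP[].
rewrite /path_len -rcons_cons rs_rcons -cat_cons rs_cat (rs_cons v).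
have := rs_ge0 q2 xpos; lra.
Qed.

Lemma extend_path a b q v : is_path adj a b q -> v \notin a :: q -> adj b v ->
  is_path adj a v (rcons q v) /\ path_len x a (rcons q v) = path_len x a q + x v.
Proof.
move=> [pq [lq uq]] vq bv; split; last by rewrite /path_len -rcons_cons rs_rcons.
split; last split.
- by rewrite rcons_path pq lq bv.
- by rewrite last_rcons.
- by rewrite -rcons_cons rcons_uniq vq uq.
Qed.

Lemma size_simple a b q : is_path adj a b q -> (size (a :: q) <= #|V|)%N.
Proof.
move=> [_ [_ uq]]; move/card_uniqP: uq => <-; exact: max_card.
Qed.

Definition allseqs : seq (seq V) :=
  flatten [seq [seq val t | t <- enum {: n.-tuple V}] | n <- iota 0 #|V|].

Lemma mem_allseqs q : (size q < #|V|)%N -> q \in allseqs.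
Proof.
move=> sq; apply/flatten_mapP; exists (size q); first by rewrite mem_iota.
apply/mapP; exists (in_tuple q) => //; by rewrite mem_enum.
Qed.

Lemma dist_exists a b : (exists q, is_path adj a b q) -> exists d, is_dist adj x a b d.
Proof.
move=> [q0 H0].
have [q [qL [Pq Hq]]] := list_min (path_len x a) (P := is_path adj a b) (L := allseqs)
  (ex_intro _ q0 (conj (mem_allseqs (size_simple H0)) H0)).
exists (path_len x a q); split; first by exists q.
move=> q' Hq'; apply: Hq => //; exact: mem_allseqs (size_simple Hq').
Qed.

Lemma dist_unique a b d1 d2 : is_dist adj x a b d1 -> is_dist adj x a b d2 -> d1 = d2.
Proof.
move=> [[q1 [P1 <-]] H1] [[q2 [P2 <-]] H2].
apply: Rle_antisym; [exact: H1 | exact: H2].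
Qed.

End Paths.


Section Dist.
Variables (V : finType) (adj : rel V) (x : V -> R).
Hypothesis xpos : forall v, 0 <= x v.
Hypothesis adjsym : symmetric adj.

Definition reach a b := exists q, is_path adj a b q.

Definition Dst a b : R :=
  match excluded_middle_informative (reach a b) with
  | left H => proj1_sig (constructive_indefinite_description _ (dist_exists x H))
  | right _ => 0 end.

Lemma Dst_spec a b : reach a b -> is_dist adj x a b (Dst a b).
Proof.
rewrite /Dst; case: excluded_middle_informative => // H _.
exact: proj2_sig (constructive_indefinite_description _ (dist_exists x H)).
Qed.

Lemma ball_iff u r v : ball adj x u r v <-> reach u v /\ Dst u v <= r.
Proof.
split.
  move=> [d [Hd le]].
  have Hr : reach u v by case: Hd => [[q [Hq _]] _]; exists q.
  split=> //; by rewrite (dist_unique (Dst_spec Hr) Hd).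
move=> [Hr le]; exists (Dst u v); split=> //; exact: Dst_spec.
Qed.

Lemma bplus_iff u r v : x u = 0 ->
  (ball_plus adj x u r v <-> reach u v /\ Dst u v - x v <= r /\ r < Dst u v).
Proof.
move=> xu0; split.
  move=> [nb [b [/ball_iff [rb lb] bv]]].
  have [[qb [Pb Lb]] _] := Dst_spec rb.
  have [vq|vq] := boolP (v \in u :: qb).
    have [q' [Pq' Lq']] := prefix_path xpos Pb vq.
    exfalso; apply: nb; apply/ball_iff.
    have rv : reach u v by exists q'.
    split=> //; have [_ H] := Dst_spec rv; have := H _ Pq'; lra.
  have [Pe Le] := extend_path x Pb vq bv.
  have rv : reach u v by exists (rcons qb v).
  have [_ H] := Dst_spec rv; have := H _ Pe.
  split=> //; split; first lra.
  apply: Rnot_le_lt => le; apply: nb; apply/ball_iff; by split.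
move=> [rv [h1 h2]]; split.
  by move/ball_iff=> [_ le]; lra.
have [[q [[pq [lq uq]] Lq]] _] := Dst_spec rv.
move: pq lq uq Lq; case/lastP: q => [|q1 y].
  move=> _ /= vu _; subst v; rewrite /path_len rs_cons rs_nil xu0 => E; lra.
rewrite rcons_path last_rcons => /andP[p1 e1] yv uq Lq; subst y.
exists (last u q1); split; last by [].
have P1 : is_path adj u (last u q1) q1.
  split=> //; split=> //; by move: uq; rewrite -rcons_cons rcons_uniq => /andP[].
have [_ H] := Dst_spec (ex_intro _ q1 P1).
apply/ball_iff; split; first by exists q1.
have := H _ P1; rewrite /path_len -rcons_cons rs_rcons in Lq; rewrite /path_len; lra.
Qed.

Lemma last_rev_belast (b : V) q : last (last b q) (rev (belast b q)) = b.
Proof.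
have E : rev (b :: q) = last b q :: rev (belast b q) by rewrite lastI rev_rcons.
have : last b (rev (b :: q)) = b by rewrite rev_cons last_rcons.
by rewrite E.
Qed.

Lemma pair_bound a b v :
  (forall q, is_path adj a b q -> 1 <= path_len x a q) ->
  reach a v -> reach b v -> 1 <= Dst a v + Dst b v - x v.
Proof.
move=> Hab ra rb.
have [[qa [[pa [la ua]] La]] _] := Dst_spec ra.
have [[qb [[pb [lb ub]] Lb]] _] := Dst_spec rb.
set w := qa ++ rev (belast b qb).
have pw : path adj a w.
  rewrite /w cat_path pa la /= -lb rev_path.
  by rewrite (@eq_path _ _ adj) // => y z; rewrite adjsym.
have lw : last a w = b by rewrite /w last_cat la -lb last_rev_belast.
have sw : path_len x a w = Dst a v + Dst b v - x v.
  rewrite /path_len /w -cat_cons rs_cat rs_rev -/(path_len x a qa) La.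
  have : rsum_seq (b :: qb) x = rsum_seq (belast b qb) x + x v.
    by rewrite lastI rs_rcons lb.
  rewrite -/(path_len x b qb) Lb; lra.
rewrite -sw; move: lw; case: (shortenP pw) => p' pp' up' sub' lp'.
have : 1 <= path_len x a p' by apply: Hab; split.
move=> h; apply: Rle_trans h _.
apply: rs_sub => // y; rewrite !inE => /orP[->//|/sub' ->]; by rewrite orbT.
Qed.

End Dist.


Lemma exR_const_on (f : R -> R) a b c : a <= b -> (forall t, a < t < b -> f t = c) ->
  ex_RInt f a b /\ RInt f a b = (b - a) * c.
Proof.
move=> ab H.
have E : forall t, Rmin a b < t < Rmax a b -> (fun _ => c) t = f t.
  by move=> t; rewrite Rmin_left // Rmax_right // => h; rewrite H.
split; first exact: ex_RInt_ext E (ex_RInt_const _ _ _).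
rewrite -(RInt_ext _ _ _ _ E) RInt_const /scal /= /mult /=; lra.
Qed.

Lemma pc_ex_RInt (f : R -> R) (L : seq R) a b : a <= b ->
  (forall t t', a < t -> t <= t' -> t' < b -> (forall p, p \in L -> ~ (t <= p <= t')) -> f t = f t') ->
  ex_RInt f a b.
Proof.
elim: L a b => [|p L IH] a b ab H.
  have [eab|lab] := Req_dec a b; first by rewrite eab; exact: ex_RInt_point.
  have ab' : a < b by lra.
  pose c := (a + b) / 2.
  have Hc : forall t, a < t < b -> f t = f c.
    move=> t [h1 h2]; rewrite /c; have [tc|ct] := Rle_dec t ((a+b)/2).
      apply: H; try lra; move=> q; by rewrite in_nil.
    symmetry; apply: H; try lra; move=> q; by rewrite in_nil.
  by have [] := exR_const_on ab Hc.
have [[ap pb]|np] := classic (a < p < b).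
  apply: (ex_RInt_Chasles _ a p b).
    apply: (IH a p); first lra.
    move=> t t' h1 h2 h3 nq; apply: H; try lra.
    move=> q; rewrite inE => /orP[/eqP->|qL]; last exact: nq.
    lra.
  apply: (IH p b); first lra.
  move=> t t' h1 h2 h3 nq; apply: H; try lra.
  move=> q; rewrite inE => /orP[/eqP->|qL]; last exact: nq.
  lra.
apply: (IH a b ab) => t t' h1 h2 h3 nq; apply: H => //.
move=> q; rewrite inE => /orP[/eqP->|qL]; last exact: nq.
move=> hp; apply: np; lra.
Qed.

Ltac dec_all := repeat match goal with |- context [Rle_dec ?a ?b] => destruct (Rle_dec a b); cbn [is_left] in * end.

Definition stp (c t : R) : R := if Rle_dec c t then 1 else 0.
Definition cl (c : R) : R := if Rle_dec c 0 then 0 else if Rle_dec c (1/2) then c else 1/2.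

Lemma stp_int c : ex_RInt (stp c) 0 (1/2) /\ RInt (stp c) 0 (1/2) = 1/2 - cl c.
Proof.
have p0 : 0 <= cl c <= 1/2 by rewrite /cl; dec_all; lra.
have [e1 i1] : ex_RInt (stp c) 0 (cl c) /\ RInt (stp c) 0 (cl c) = (cl c - 0) * 0.
  apply: exR_const_on; first lra.
  move=> t ht; rewrite /stp; case: Rle_dec => // ct; exfalso.
  move: ht; rewrite /cl; dec_all; lra.
have [e2 i2] : ex_RInt (stp c) (cl c) (1/2) /\ RInt (stp c) (cl c) (1/2) = (1/2 - cl c) * 1.
  apply: exR_const_on; first lra.
  move=> t ht; rewrite /stp; case: Rle_dec => // ct; exfalso.
  move: ht; rewrite /cl; dec_all; lra.
split; first exact: ex_RInt_Chasles e1 e2.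
rewrite -(RInt_Chasles _ _ _ _ e1 e2) i1 i2 /plus /=; lra.
Qed.

Lemma stp_ge0 c t : 0 <= stp c t.
Proof. rewrite /stp; dec_all; lra. Qed.

Lemma stp_le c1 c2 t : c1 <= c2 -> stp c2 t <= stp c1 t.
Proof. rewrite /stp => h; dec_all; lra. Qed.

Lemma RInt_bigsum (I : Type) (r : seq I) (F : I -> R -> R) a b :
  (forall i, ex_RInt (F i) a b) ->
  ex_RInt (fun t => \big[Rplus/0]_(i <- r) F i t) a b /\
  RInt (fun t => \big[Rplus/0]_(i <- r) F i t) a b = \big[Rplus/0]_(i <- r) RInt (F i) a b.
Proof.
move=> H; elim: r => [|i r [e IH]].
  have E : forall t, Rmin a b < t < Rmax a b -> (fun _ => 0) t = (fun t => \big[Rplus/0]_(i <- [::]) F i t) t.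
    by move=> t _; rewrite big_nil.
  split; first exact: ex_RInt_ext E (ex_RInt_const _ _ _).
  rewrite -(RInt_ext _ _ _ _ E) RInt_const big_nil /scal /= /mult /=; lra.
have E : forall t, Rmin a b < t < Rmax a b -> (fun t => plus (F i t) (\big[Rplus/0]_(j <- r) F j t)) t = (fun t => \big[Rplus/0]_(j <- i :: r) F j t) t.
  by move=> t _; rewrite big_cons.
split; first by apply: ex_RInt_ext E _; apply: ex_RInt_plus.
rewrite -(RInt_ext _ _ _ _ E) RInt_plus // IH big_cons.
by [].
Qed.

Lemma RInt_scal' (f : R -> R) a b c : ex_RInt f a b ->
  ex_RInt (fun t => c * f t) a b /\ RInt (fun t => c * f t) a b = c * RInt f a b.
Proof.
move=> e; split; first exact: (ex_RInt_scal f a b c e).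
exact: (RInt_scal f a b c e).
Qed.


Section Main.
Variables (V : finType) (adj : rel V) (k : nat) (s : 'I_k -> V) (w x : V -> R).
Hypothesis adjsym : symmetric adj.
Hypothesis k2 : (2 <= k)%N.
Hypothesis wpos : forall v, 0 <= w v.
Hypothesis feas : node_mc_feasible adj s x.

Let xpos : forall v, 0 <= x v. Proof. by case: feas. Qed.
Let xs0 : forall i, x (s i) = 0. Proof. by case: feas => _ []. Qed.
Let feas3 : forall i j : 'I_k, (i < j)%N -> forall q, is_path adj (s i) (s j) q -> 1 <= path_len x (s i) q.
Proof. by case: feas => _ []. Qed.

Let D i v := Dst adj x (s i) v.

Let Qiff i t v : ball_plus adj x (s i) t v <-> reach adj (s i) v /\ D i v - x v <= t /\ t < D i v.
Proof. exact: bplus_iff. Qed.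

Let pairD i j v : i <> j -> reach adj (s i) v -> reach adj (s j) v -> 1 <= D i v + D j v - x v.
Proof.
move=> ij ri rj; rewrite /D; have [lt|gt|eq] := ltngtP i j.
- have := pair_bound xpos adjsym (feas3 lt) ri rj; lra.
- have := pair_bound xpos adjsym (feas3 gt) rj ri; lra.
- by exfalso; apply: ij; apply: val_inj.
Qed.

Definition hh v (l : 'I_k) t : R :=
  if excluded_middle_informative (cut_set adj s x l t v) then 1 else 0.

Lemma avg_eq t : avg_cut_weight adj s w x t =
  / INR k * \big[Rplus/0]_(v : V) (w v * \big[Rplus/0]_(l < k) hh v l t).
Proof.
rewrite /avg_cut_weight /wset; congr (_ * _).
change ((\sum_(l < k) \sum_(v : V) (if excluded_middle_informative (cut_set adj s x l t v) then w v else 0))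
  = \sum_(v : V) (w v * \sum_(l < k) hh v l t))%R.
rewrite exchange_big; apply: eq_bigr => v _.
rewrite GRing.mulr_sumr; apply: eq_bigr => l _.
rewrite /hh; destruct (excluded_middle_informative (cut_set adj s x l t v)).
  by rewrite GRing.mulr1.
by rewrite GRing.mulr0.
Qed.

Definition bps : seq R :=
  [seq (if z.2 then D z.1.1 z.1.2 - x z.1.2 else D z.1.1 z.1.2) | z <- enum {: 'I_k * V * bool}].


Lemma bp_iff i t t' v : t <= t' -> (forall p, p \in bps -> ~ (t <= p <= t')) ->
  (ball_plus adj x (s i) t v <-> ball_plus adj x (s i) t' v).
Proof.
move=> tt' nb.
have m1 : D i v - x v \in bps by apply/mapP; exists (i, v, true); rewrite ?mem_enum.
have m2 : D i v \in bps by apply/mapP; exists (i, v, false); rewrite ?mem_enum.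
have n1 := nb _ m1; have n2 := nb _ m2.
rewrite !Qiff; split => [[r [h1 h2]]|[r [h1 h2]]]; split => //; split.
- lra.
- apply: Rnot_le_lt => h; apply: n2; lra.
- apply: Rnot_lt_le => h; apply: n1; lra.
- lra.
Qed.

Lemma cut_iff l t t' v : t <= t' -> (forall p, p \in bps -> ~ (t <= p <= t')) ->
  (cut_set adj s x l t v <-> cut_set adj s x l t' v).
Proof.
move=> tt' nb; split => [[i [il h]]|[i [il h]]]; exists i; split => //.
- by apply/(bp_iff i v tt' nb).
- by apply/(bp_iff i v tt' nb).
Qed.

Lemma avg_ex : ex_RInt (avg_cut_weight adj s w x) 0 (1/2).
Proof.
apply: (pc_ex_RInt (L := bps)); first lra.
move=> t t' _ tt' _ nb.
rewrite /avg_cut_weight /wset; congr (_ * _); apply: eq_bigr => l _; apply: eq_bigr => v _.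
have := cut_iff l v tt' nb.
destruct (excluded_middle_informative (cut_set adj s x l t v));
destruct (excluded_middle_informative (cut_set adj s x l t' v)); cbn [is_left]; tauto.
Qed.


Definition Mv (m xv : R) := if Rle_dec m (1 - xv - m) then 1 - xv - m else m.

Lemma arith_bound m xv : 0 <= xv -> (1/2 - cl m) - (1/2 - cl (m + xv)) + (1/2 - cl (Mv m xv)) <= xv.
Proof. move=> h; rewrite /cl /Mv; dec_all; lra. Qed.

Lemma hh01 v l t : 0 <= hh v l t <= 1.
Proof. rewrite /hh; destruct excluded_middle_informative; simpl; lra. Qed.

Lemma INRk2 : 2 <= INR k.
Proof. have h : (2 <= k)%coq_nat by apply/leP. have := le_INR 2 k h; simpl; lra. Qed.

Lemma sum_le_bd (F G : 'I_k -> R) : (forall l, F l <= G l) ->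
  \big[Rplus/0]_(l < k) F l <= \big[Rplus/0]_(l < k) G l.
Proof.
move=> H; apply/RleP.
change ((\sum_(l < k) F l) <= \sum_(l < k) G l)%R.
apply: Num.Theory.ler_sum => l _; apply/RleP; exact: H.
Qed.

Lemma bound_v v : exists B : R -> R, ex_RInt B 0 (1/2) /\ RInt B 0 (1/2) <= x v /\
  (forall t, 0 < t < 1/2 -> \big[Rplus/0]_(l < k) hh v l t <= (INR k - 1) * B t).
Proof.
have K2 := INRk2.
have [ex|nex] := classic (exists i, reach adj (s i) v); last first.
  exists (fun _ => 0); split; first exact: ex_RInt_const.
  split.
    rewrite RInt_const /scal /= /mult /=; have := xpos v; lra.
  move=> t _; rewrite big1; first lra.
  move=> l _; rewrite /hh; destruct excluded_middle_informative as [c|]; simpl; last by [].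
  exfalso; case: c => i [_ /Qiff [ri _]]; apply: nex; by exists i.
have [i0 [_ [ri0 Hmin]]] := list_min (fun i => D i v) (L := enum 'I_k)
   (P := fun i => reach adj (s i) v) (ex_intro _ (proj1_sig (constructive_indefinite_description _ ex)) (conj (mem_enum _ _) (proj2_sig (constructive_indefinite_description _ ex)))).
pose m := D i0 v - x v.
pose M := Mv m (x v).
exists (fun t => stp m t - stp (m + x v) t + stp M t).
have [e1 r1] := stp_int m; have [e2 r2] := stp_int (m + x v); have [e3 r3] := stp_int M.
have E : (fun t => stp m t - stp (m + x v) t + stp M t) =
  (fun t => plus (minus (stp m t) (stp (m + x v) t)) (stp M t)) by [].
split; first by rewrite E; apply: ex_RInt_plus => //; apply: ex_RInt_minus.
split.
  rewrite E RInt_plus //; last exact: ex_RInt_minus.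
  rewrite RInt_minus // r1 r2 r3 /plus /minus /plus /opp /=.
  have := arith_bound m (xpos v); rewrite /M; lra.
move=> t [t0 t1].
have F1 : forall i, ball_plus adj x (s i) t v -> m <= t < m + x v.
  move=> i /Qiff [ri [h1 h2]].
  have hm := Hmin i (mem_enum _ _) ri; rewrite /m; split; first lra.
  have [ii0|ii0] := classic (i = i0); first by rewrite -ii0; lra.
  have := pairD ii0 ri ri0; lra.
have F2 : forall j, j <> i0 -> ball_plus adj x (s j) t v -> M <= t.
  move=> j ji0 /Qiff [rj [h1 h2]].
  have hm := Hmin j (mem_enum _ _) rj.
  have := pairD ji0 rj ri0; rewrite /M /Mv /m; dec_all; lra.
have Bge0 : 0 <= stp m t - stp (m + x v) t + stp M t.
  have := stp_le t (Rplus_le_compat_l m _ _ (xpos v)); rewrite Rplus_0_r.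
  have := stp_ge0 M t; lra.
have [[i Qi]|nQ] := classic (exists i, ball_plus adj x (s i) t v); last first.
  rewrite big1; first by apply: Rmult_le_pos => //; lra.
  move=> l _; rewrite /hh; destruct excluded_middle_informative as [c|]; simpl; last by [].
  exfalso; case: c => i [_ Qi]; apply: nQ; by exists i.
have [h1 h2] := F1 i Qi.
have s1 : stp m t = 1 by rewrite /stp; dec_all; lra.
have s2 : stp (m + x v) t = 0 by rewrite /stp; dec_all; lra.
rewrite s1 s2.
have [[j [ji0 Qj]]|nQ2] := classic (exists j, j <> i0 /\ ball_plus adj x (s j) t v).
  have s3 : stp M t = 1 by have := F2 j ji0 Qj; rewrite /stp; dec_all; lra.
  rewrite s3; apply: Rle_trans (sum_le_bd (G := fun _ => 1) (fun l => proj2 (hh01 v l t))) _.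
  rewrite sum_ones; lra.
have h0 : hh v i0 t = 0.
  rewrite /hh; destruct excluded_middle_informative as [c|]; simpl; last by [].
  exfalso; case: c => j [ji0 Qj]; apply: nQ2; by exists j.
have S1 : \big[Rplus/0]_(l<k) hh v l t = hh v i0 t + \big[Rplus/0]_(l < k | l != i0) hh v l t.
  change ((\sum_(l<k) hh v l t) = hh v i0 t + \sum_(l < k | l != i0) hh v l t)%R.
  by rewrite (bigD1 i0).
have S2 : \big[Rplus/0]_(l<k) (1:R) = 1 + \big[Rplus/0]_(l < k | l != i0) (1:R).
  change ((\sum_(l<k) (1:R)) = 1 + \sum_(l < k | l != i0) (1:R))%R.
  by rewrite (bigD1 i0).
have S3 : \big[Rplus/0]_(l < k | l != i0) hh v l t <= \big[Rplus/0]_(l < k | l != i0) (1:R).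
  apply/RleP.
  change ((\sum_(l < k | l != i0) hh v l t) <= \sum_(l < k | l != i0) (1:R))%R.
  apply: Num.Theory.ler_sum => l _; apply/RleP; exact: proj2 (hh01 v l t).
rewrite sum_ones in S2.
have := stp_ge0 M t.
rewrite S1 h0; move=> hM.
have : (INR k - 1) * 1 <= (INR k - 1) * (1 - 0 + stp M t) by apply: Rmult_le_compat_l; lra.
lra.
Qed.

Lemma sumV_le (F G : V -> R) : (forall v, F v <= G v) ->
  \big[Rplus/0]_(v : V) F v <= \big[Rplus/0]_(v : V) G v.
Proof.
move=> H; apply/RleP.
change ((\sum_(v : V) F v) <= \sum_(v : V) G v)%R.
apply: Num.Theory.ler_sum => l _; apply/RleP; exact: H.
Qed.

Lemma main_bound : exists pr : Riemann_integrable (avg_cut_weight adj s w x) 0 (1/2),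
  2 * RiemannInt pr <= 2 * (1 - 1 / INR k) * \big[Rplus/0]_(v : V) (w v * x v).
Proof.
have K2 := INRk2.
pose Bf v := proj1_sig (constructive_indefinite_description _ (bound_v v)).
have HB : forall v, ex_RInt (Bf v) 0 (1/2) /\ RInt (Bf v) 0 (1/2) <= x v /\
  (forall t, 0 < t < 1/2 -> \big[Rplus/0]_(l < k) hh v l t <= (INR k - 1) * Bf v t).
  move=> v; exact: proj2_sig (constructive_indefinite_description _ (bound_v v)).
have eG : forall v, ex_RInt (fun t => w v * ((INR k - 1) * Bf v t)) 0 (1/2) /\
   RInt (fun t => w v * ((INR k - 1) * Bf v t)) 0 (1/2) = w v * ((INR k - 1) * RInt (Bf v) 0 (1/2)).
  move=> v; have [e1 r1] := RInt_scal' (INR k - 1) (proj1 (HB v)).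
  have [e2 r2] := RInt_scal' (w v) e1.
  by rewrite r2 r1.
have [eS rS] := RInt_bigsum (index_enum V) (F := fun v t => w v * ((INR k - 1) * Bf v t)) (a := 0) (b := 1/2) (fun v => proj1 (eG v)).
have [eT rT] := RInt_scal' (/ INR k) eS.
have eA := avg_ex.
exists (ex_RInt_Reals_0 _ _ _ eA); rewrite -RInt_Reals.
have le1 := @Coquelicot.RInt.RInt_le (avg_cut_weight adj s w x) _ 0 (1/2) ltac:(lra) eA eT.
have rG : RInt (fun t => / INR k * \big[Rplus/0]_(v <- index_enum V) (w v * ((INR k - 1) * Bf v t))) 0 (1/2)
   = / INR k * \big[Rplus/0]_(v <- index_enum V) (w v * ((INR k - 1) * RInt (Bf v) 0 (1/2))).
  rewrite rT rS; congr (_ * _); apply: eq_bigr => v _; exact: (proj2 (eG v)).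
have st1 : RInt (avg_cut_weight adj s w x) 0 (1 / 2) <=
   RInt (fun t => / INR k * \big[Rplus/0]_(v <- index_enum V) (w v * ((INR k - 1) * Bf v t))) 0 (1/2).
  apply: le1 => t ht.
  rewrite avg_eq; apply: Rmult_le_compat_l.
    apply: Rlt_le; apply: Rinv_0_lt_compat; lra.
  apply: sumV_le => v; apply: Rmult_le_compat_l => //; exact: (proj2 (proj2 (HB v))).
have st2 : / INR k * \big[Rplus/0]_(v <- index_enum V) (w v * ((INR k - 1) * RInt (Bf v) 0 (1/2)))
   <= / INR k * \big[Rplus/0]_(v : V) (w v * ((INR k - 1) * x v)).
  apply: Rmult_le_compat_l.
    apply: Rlt_le; apply: Rinv_0_lt_compat; lra.
  apply: sumV_le => v; apply: Rmult_le_compat_l => //; apply: Rmult_le_compat_l; first lra.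
  exact: (proj1 (proj2 (HB v))).
have E : \big[Rplus/0]_(v : V) (w v * ((INR k - 1) * x v)) = (INR k - 1) * \big[Rplus/0]_(v : V) (w v * x v).
  change ((\sum_(v : V) (w v * ((INR k - 1) * x v))) = (INR k - 1) * \sum_(v : V) (w v * x v))%R.
  rewrite GRing.mulr_sumr; apply: eq_bigr => v _.
  change (w v * ((INR k - 1) * x v) = (INR k - 1) * (w v * x v)); ring.
rewrite E in st2.
have E2 : 2 * (1 - 1 / INR k) * \big[Rplus/0]_(v : V) (w v * x v) =
  2 * (/ INR k * ((INR k - 1) * \big[Rplus/0]_(v : V) (w v * x v))).
  field; lra.
rewrite E2; lra.
Qed.

End Main.


Theorem mainTheorem11 (V : finType) (adj : rel V) (k : nat) (s : 'I_k -> V)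
  (w x : V -> R) :
  symmetric adj -> irreflexive adj ->
  (2 <= k)%N ->
  injective s ->
  (forall i j : 'I_k, ~~ adj (s i) (s j)) ->
  (forall v, 0 <= w v) ->
  node_mc_feasible adj s x ->
  exists pr : Riemann_integrable (avg_cut_weight adj s w x) 0 (1/2),
    2 * RiemannInt pr <= 2 * (1 - 1 / INR k) * \big[Rplus/0]_(v : V) (w v * x v).
Proof.
move=> hsym _ hk _ _ hw hf.
exact: main_bound hsym hk hw hf.
Qed.
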